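(* The function $\beta\mapsto\lambda_1(\beta)$ is non-increasing on $(0,\tfrac12)$, and for every $\beta\in(0,\tfrac12)$, $$\frac{(1-2\beta)^2}{\beta^2+(1-\beta)^2}\le\lambda_1(\beta)\le\frac{1-2\beta}{1-\beta}.$$
   Context: Tree: for an integer $m\ge2$, the regular $m$-branching tree $\mathbb{T}_m$ has as vertices the root $\emptyset$ and all finite sequences $(\emptyset,a_1,\dots,a_k)$, $k\in\mathbb{N}$, $a_i\in\{0,\dots,m-1\}$. The level of $x=(\emptyset,a_1,\dots,a_k)$ is $|x|=k$ ($|\emptyset|=0$). The successors of $x$ are $(x,i)$; for $x\ne\emptyset$, $\hat x$ denotes its immediate predecessor. Operator: for $\beta\in[0,1)$ let $p_\beta=1$ if $\beta=0$ and $p_\beta=\beta/(1-\beta)$ if $\beta\in(0,1)$. For $u:\mathbb{T}_m\to\mathbb{R}$, $\Delta_\beta u(\emptyset)=\frac1m\sum_{i=0}^{m-1}u(\emptyset,i)-u(\emptyset)$ and, for $x\ne\emptyset$, $\Delta_\beta u(x)=\big(\beta u(\hat x)+\frac{1-\beta}{m}\sum_{i=0}^{m-1}u(x,i)-u(x)\big)p_\beta^{-|x|}$. $\mathcal{A}_\beta=\{\lambda>0:\exists v:\mathbb{T}_m\to\mathbb{R}\text{ and constants }0<c<C\text{ with } c<v<C \text{ on }\mathbb{T}_m \text{ and } \Delta_\beta v+\lambda v\le0 \text{ on }\mathbb{T}_m\}$, and $\lambda_1(\beta)=\sup\mathcal{A}_\beta$. *)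

(* Defs.v *)
From mathcomp Require Import all_boot all_order all_algebra.
From mathcomp Require Import all_classical all_reals all_analysis.
Set Implicit Arguments. Unset Strict Implicit. Unset Printing Implicit Defensive.
Import Order.TTheory GRing.Theory Num.Theory.
Local Open Scope ring_scope.
Local Open Scope classical_set_scope.

(* Vertices of the regular m-branching tree T_m: the root (empty sequence)
   and all finite sequences (a_1,...,a_k) with a_i in {0,...,m-1}. *)
Definition vertex (m : nat) := seq 'I_m.
Definition level (m : nat) (x : vertex m) : nat := size x.
Definition succ (m : nat) (x : vertex m) (i : 'I_m) : vertex m := rcons x i.
Definition pred_v (m : nat) (x : vertex m) : vertex m := take (size x).-1 x.

Section Op.
Variable R : realType.

Definition p_beta (beta : R) : R := if beta == 0 then 1 else beta / (1 - beta).

Definition Delta (m : nat) (beta : R) (u : vertex m -> R) (x : vertex m) : R :=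
  if x is [::] then
    (m%:R)^-1 * (\sum_(i < m) u (succ x i)) - u x
  else
    (beta * u (pred_v x) + (1 - beta) / m%:R * (\sum_(i < m) u (succ x i)) - u x)
      * (p_beta beta ^+ level x)^-1.

Definition A_beta (m : nat) (beta : R) : set R :=
  [set lam : R | 0 < lam /\
     exists (v : vertex m -> R) (c C : R),
       [/\ 0 < c, c < C,
           (forall x, c < v x /\ v x < C) &
           (forall x, Delta beta v x + lam * v x <= 0)]].

(* lambda_1(beta) = sup A_beta, taken in the extended reals (sup of the empty
   set is -oo, of an unbounded set +oo). *)
Definition lambda1 (m : nat) (beta : R) : \bar R :=
  ereal_sup [set (lam%:E) | lam in A_beta m beta].

End Op.

(* Main.v *)
Require Import Defs.
From mathcomp Require Import all_boot all_order all_algebra.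
From mathcomp Require Import all_classical all_reals all_analysis.
From mathcomp Require Import ring lra.
Import Order.TTheory GRing.Theory Num.Theory.
Local Open Scope ring_scope.

Section S.
Variable R : realType.
Local Open Scope classical_set_scope.

Lemma pow_small (p e : R) : 0 <= p -> p < 1 -> 0 < e -> exists k : nat, p ^+ k < e.
Proof.
move=> p0 p1 e0.
have hp : `|p| < 1 by rewrite ger0_norm.
have := @cvg_geometric R 1 p hp.
move=> /cvgr0_norm_lt /(_ e e0) [N _ HN].
exists N; have := HN N (leqnn N); rewrite /= mul1r ger0_norm //.
exact: exprn_ge0.
Qed.

Lemma seq_dec (b l : R) (F : nat -> R) :
  0 < b -> b < 1 -> 0 < l -> (forall k, 0 < F k) ->
  F 1%N <= (1 - l) * F 0%N ->
  (forall k, b * F k + (1 - b) * F k.+2 <= (1 - l * (b / (1 - b)) ^+ k.+1) * F k.+1) ->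
  forall k, l * F 0%N * (b / (1 - b)) ^+ k <= F k - F k.+1.
Proof.
move=> b0 b1 l0 Fp h0 hr; elim=> [|k IH].
  rewrite expr0 mulr1; lra.
have hb : 0 < 1 - b by lra.
have := hr k.
set P := (b / (1 - b)) ^+ k.+1.
have P0 : 0 <= P by apply: exprn_ge0; apply: divr_ge0; lra.
have lPF : 0 <= l * P * F k.+1 by apply: mulr_ge0; [apply: mulr_ge0; lra|exact: ltW].
move=> H.
have H2 : b * (F k - F k.+1) <= (1 - b) * (F k.+1 - F k.+2).
  have : b * F k + (1 - b) * F k.+2 <= F k.+1 - l * P * F k.+1.
    by move: H; rewrite (_ : (1 - l * P) * F k.+1 = F k.+1 - l * P * F k.+1) //; ring.
  lra.
rewrite /P exprSr mulrA.
set t := l * F 0%N * (b / (1 - b)) ^+ k.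
rewrite mulrA ler_pdivrMr //.
have := ler_wpM2r (ltW b0) IH; rewrite -/t => ?.
lra.
Qed.

Lemma seq_ub (b l : R) (F : nat -> R) :
  0 < b -> b < 2^-1 -> 0 < l -> (forall k, 0 < F k) ->
  (forall k, l * F 0%N * (b / (1 - b)) ^+ k <= F k - F k.+1) ->
  l <= (1 - 2 * b) / (1 - b).
Proof.
move=> b0 b1 l0 Fp hd.
have hb : 0 < 1 - b by lra.
set p := b / (1 - b).
have p0 : 0 <= p by rewrite /p; apply: divr_ge0; lra.
have ep : 1 - p = (1 - 2 * b) / (1 - b) by rewrite /p; field; lra.
have p1 : p < 1 by rewrite /p ltr_pdivrMr //; lra.
rewrite -ep.
have key : forall k, l * F 0%N * (1 - p ^+ k) <= (1 - p) * (F 0%N - F k).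
  elim=> [|k IH]; first by rewrite expr0 !subrr !mulr0.
  have := hd k; rewrite -/p => hk.
  have e : l * F 0%N * (1 - p ^+ k.+1) = l * F 0%N * (1 - p ^+ k) + (1 - p) * (l * F 0%N * p ^+ k).
    by rewrite exprSr; ring.
  rewrite e.
  have : (1 - p) * (l * F 0%N * p ^+ k) <= (1 - p) * (F k - F k.+1).
    by apply: ler_wpM2l => //; lra.
  have -> : (1 - p) * (F 0%N - F k.+1) = (1 - p) * (F 0%N - F k) + (1 - p) * (F k - F k.+1) by ring.
  lra.
rewrite leNgt; apply/negP => hl.
have d0 : 0 < (l - (1 - p)) / l by apply: divr_gt0; lra.
have [k hk] := @pow_small p _ p0 p1 d0.
have := key k.
have hF0 := Fp 0%N; have hFk := Fp k.
have : l * p ^+ k < l - (1 - p).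
  by move: hk; rewrite ltr_pdivlMr // mulrC.
move=> h1 h2.
have h3 : (1 - p) * F 0%N < l * F 0%N * (1 - p ^+ k).
  rewrite -mulrA [F 0%N * _]mulrC mulrA ltr_pM2r //; lra.
have h4 : (1 - p) * (F 0%N - F k) < (1 - p) * F 0%N.
  rewrite ltr_pM2l; lra.
lra.
Qed.
End S.

Section S2.
Variable R : realType.
Local Open Scope classical_set_scope.

Definition levinf (m : nat) (v : vertex m -> R) (k : nat) : R :=
  inf [set y | exists x : vertex m, size x = k /\ y = v x].
Arguments levinf {m}.

Lemma levinf_le m (v : vertex m -> R) c x :
  (forall x, c <= v x) -> levinf v (size x) <= v x.
Proof.
move=> hc; rewrite /levinf; apply: ge_inf; last by exists x.
by exists c => _ [y [_ ->]].
Qed.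

Lemma levinf_ge m (hm : (0 < m)%N) (v : vertex m -> R) a k :
  (forall x : vertex m, size x = k -> a <= v x) -> a <= levinf v k.
Proof.
move=> h; rewrite /levinf; apply: lb_le_inf.
  exists (v (nseq k (Ordinal hm))), (nseq k (Ordinal hm)).
  by rewrite size_nseq.
by move=> _ [x [hx ->]]; exact: h.
Qed.

Lemma avg_ge m (hm : (0 < m)%N) (a : R) (w : 'I_m -> R) :
  (forall i, a <= w i) -> a <= (m%:R)^-1 * \sum_(i < m) w i.
Proof.
move=> h.
have hs : \sum_(i < m) a <= \sum_(i < m) w i by apply: ler_sum => i _; exact: h.
rewrite sumr_const card_ord in hs.
have -> : a = (m%:R)^-1 * (a *+ m).
  by rewrite mulrC -[a *+ m]mulr_natr mulfK // pnatr_eq0 -lt0n.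
apply: ler_wpM2l => //; rewrite invr_ge0; exact: ler0n.
Qed.

Lemma avg_const m (hm : (0 < m)%N) (a : R) :
  (m%:R)^-1 * \sum_(i < m) a = a.
Proof.
by rewrite sumr_const card_ord mulrC -[a *+ m]mulr_natr mulfK // pnatr_eq0 -lt0n.
Qed.

Lemma pbetaE (b : R) : 0 < b -> p_beta b = b / (1 - b).
Proof. by move=> b0; rewrite /p_beta gt_eqF. Qed.

Lemma size_pred_v m (a : 'I_m) s : size (pred_v (a :: s)) = size s.
Proof. by rewrite /pred_v size_takel. Qed.

Lemma size_succ m (x : vertex m) i : size (succ x i) = (size x).+1.
Proof. by rewrite /succ size_rcons. Qed.

Lemma radial m (hm : (0 < m)%N) (b l c C : R) (v : vertex m -> R) :
  0 < b -> b < 1 -> 0 < l -> 0 < c ->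
  (forall x, c < v x /\ v x < C) ->
  (forall x, Delta b v x + l * v x <= 0) ->
  [/\ (forall k, c <= levinf v k), (forall k, levinf v k < C),
      levinf v 1 <= (1 - l) * levinf v 0 &
      (forall k, b * levinf v k + (1 - b) * levinf v k.+2
          <= (1 - l * (b / (1 - b)) ^+ k.+1) * levinf v k.+1)].
Proof.
move=> b0 b1 l0 c0 hv hD.
have hc : forall x, c <= v x by move=> x; exact: ltW (hv x).1.
set F := levinf v.
have Fle : forall x, F (size x) <= v x by move=> x; exact: levinf_le.
have Fc : forall k, c <= F k by move=> k; apply: levinf_ge => // x _; exact: hc.
have FC : forall k, F k < C.
  move=> k; have := Fle (nseq k (Ordinal hm)); rewrite size_nseq => h.
  exact: le_lt_trans h (hv _).2.
have F0 : F 0%N = v [::].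
  apply/eqP; rewrite eq_le; apply/andP; split; first exact: (Fle [::]).
  by apply: levinf_ge => // x /size0nil ->.
split => //.
- rewrite F0.
  have := hD [::]; rewrite /Delta => h.
  have : F 1%N <= (m%:R)^-1 * \sum_(i < m) v (succ [::] i).
    by apply: avg_ge => // i; have := Fle (succ [::] i); rewrite size_succ.
  lra.
- move=> k.
  set P := (b / (1 - b)) ^+ k.+1.
  have P0 : 0 < P by apply: exprn_gt0; apply: divr_gt0; lra.
  have key : forall x : vertex m, size x = k.+1 ->
      b * F k + (1 - b) * F k.+2 <= (1 - l * P) * v x.
    case=> [//|a s] /= [hs].
    have := hD (a :: s); rewrite /Delta pbetaE // /level /= hs -/P.
    set S := \sum_(i < m) _.
    move=> h.
    have hS : F k.+2 <= (m%:R)^-1 * S.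
      apply: avg_ge => // i; have := Fle (succ (a :: s) i).
      by rewrite size_succ /= hs.
    have hp : F k <= v (pred_v (a :: s)) by have := Fle (pred_v (a :: s)); rewrite size_pred_v hs.
    have e : (1 - b) / m%:R * S = (1 - b) * ((m%:R)^-1 * S) by rewrite mulrA.
    rewrite e in h.
    set X := b * v (pred_v (a :: s)) + (1 - b) * ((m%:R)^-1 * S) - v (a :: s) in h.
    have hX : X <= - (l * P * v (a :: s)).
      have : X * P^-1 * P + l * v (a :: s) * P <= 0.
        rewrite -mulrDl; apply: mulr_le0_ge0 => //; exact: ltW.
      rewrite mulfVK ?gt_eqF //; lra.
    have : b * F k <= b * v (pred_v (a :: s)) by apply: ler_wpM2l; lra.
    have : (1 - b) * F k.+2 <= (1 - b) * ((m%:R)^-1 * S) by apply: ler_wpM2l; lra.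
    rewrite /X in hX.
    have -> : (1 - l * P) * v (a :: s) = v (a :: s) - l * P * v (a :: s) by ring.
    lra.
  set L := b * F k + (1 - b) * F k.+2.
  have L0 : 0 < L.
    rewrite /L; apply: ltr_pwDl; first by apply: mulr_gt0 => //; exact: lt_le_trans c0 (Fc _).
    apply: mulr_ge0; [lra| exact: ltW (lt_le_trans c0 (Fc _))].
  have x0 := size_nseq k.+1 (Ordinal hm).
  have hpos : 0 < 1 - l * P.
    rewrite ltNge; apply/negP => hn.
    have := key _ x0.
    have : (1 - l * P) * v (nseq k.+1 (Ordinal hm)) <= 0.
      apply: mulr_le0_ge0 => //; exact: ltW (lt_le_trans c0 (hc _)).
    rewrite -/L; lra.
  have : L / (1 - l * P) <= F k.+1.
    apply: levinf_ge => // x hx.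
    rewrite ler_pdivrMr // mulrC; exact: key.
  by rewrite ler_pdivrMr // mulrC.
Qed.

End S2.

Section S3.
Variable R : realType.
Local Open Scope classical_set_scope.

Lemma A_mono m (hm : (0 < m)%N) (b1 b2 : R) : 0 < b1 -> b1 <= b2 -> b2 < 1 ->
  A_beta m b2 `<=` A_beta m b1.
Proof.
move=> b10 b12 b21 l [l0 [v [c [C [c0 cC hv hD]]]]].
have b20 : 0 < b2 by exact: lt_le_trans b10 b12.
have [Fc FC Froot Frec] := @radial R m hm b2 l c C v b20 b21 l0 c0 hv hD.
set F := @levinf R m v in Fc FC Froot Frec.
have Fp : forall k, 0 < F k by move=> k; exact: lt_le_trans c0 (Fc k).
have hd := @seq_dec R b2 l F b20 b21 l0 Fp Froot Frec.
have gp : forall k, F k.+1 <= F k.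
  move=> k; have := hd k.
  have : 0 <= l * F 0%N * (b2 / (1 - b2)) ^+ k.
    apply: mulr_ge0; first by apply: mulr_ge0; exact: ltW.
    apply: exprn_ge0; apply: divr_ge0; lra.
  lra.
split => //.
exists (fun x => F (size x)), (c / 2), C; split.
- by apply: divr_gt0.
- have := Fc 0%N; have := FC 0%N; lra.
- move=> x; split; last exact: FC.
  have := Fc (size x); lra.
case=> [|a s].
  rewrite /Delta /= (eq_bigr (fun _ => F 1%N)); last by move=> i _; rewrite /= ?size_succ ?size_rcons.
  rewrite avg_const //; lra.
rewrite /Delta pbetaE // /level /= size_pred_v.
rewrite (eq_bigr (fun _ => F (size s).+2)); last by move=> i _; rewrite /= ?size_succ ?size_rcons.
rewrite -mulrA avg_const //.
set k := size s.
set P1 := (b1 / (1 - b1)) ^+ k.+1.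
set P2 := (b2 / (1 - b2)) ^+ k.+1.
have hp1 : 0 <= b1 / (1 - b1) by apply: divr_ge0; lra.
have hp2 : 0 <= b2 / (1 - b2) by apply: divr_ge0; lra.
have hle : b1 / (1 - b1) <= b2 / (1 - b2).
  rewrite ler_pdivrMr; last lra.
  rewrite mulrAC ler_pdivlMr; last lra.
  nra.
have P12 : P1 <= P2.
  by apply: (@lerXn2r R k.+1); rewrite ?nnegrE.
have P10 : 0 < P1 by apply: exprn_gt0; apply: divr_gt0; lra.
have h2 := Frec k; rewrite -/P2 in h2.
have g1 := gp k; have g2 := gp k.+1.
have hF := Fp k.+1.
have : l * P1 * F k.+1 <= l * P2 * F k.+1.
  by apply: ler_wpM2r; [exact: ltW | apply: ler_wpM2l; [exact: ltW|]].
move=> hPP.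
set X := b1 * F k + (1 - b1) * F k.+2 - F k.+1.
have hX : X + l * P1 * F k.+1 <= 0.
  have e1 : (1 - l * P2) * F k.+1 = F k.+1 - l * P2 * F k.+1 by ring.
  rewrite e1 in h2.
  have e2 : (b2 - b1) * (F k - F k.+2) >= 0 by apply: mulr_ge0; lra.
  rewrite /X; nra.
have -> : X * P1^-1 + l * F k.+1 = (X + l * P1 * F k.+1) * P1^-1.
  by field; rewrite gt_eqF.
apply: mulr_le0_ge0 => //; rewrite invr_ge0; exact: ltW.
Qed.

End S3.

Section S4.
Variable R : realType.
Local Open Scope classical_set_scope.

Lemma lower_mem m (hm : (0 < m)%N) (b : R) : 0 < b -> b < 2^-1 ->
  A_beta m b ((1 - 2 * b) ^+ 2 / (b ^+ 2 + (1 - b) ^+ 2)).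
Proof.
move=> b0 b1.
set l := (1 - 2 * b) ^+ 2 / (b ^+ 2 + (1 - b) ^+ 2).
have hb : 0 < 1 - b by lra.
have hs : 0 < 1 - 2 * b by lra.
have hD : 0 < b ^+ 2 + (1 - b) ^+ 2.
  by apply: addr_gt0; apply: exprn_gt0; lra.
have lD : l * (b ^+ 2 + (1 - b) ^+ 2) = (1 - 2 * b) ^+ 2 by rewrite /l mulfVK ?gt_eqF.
have l0 : 0 < l by apply: divr_gt0 => //; exact: exprn_gt0.
have l1 : l < 1.
  rewrite /l ltr_pdivrMr // mul1r; nra.
pose p := b / (1 - b).
have p0 : 0 < p by apply: divr_gt0.
have p1 : p < 1 by rewrite /p ltr_pdivrMr //; lra.
have hbp : b - (1 - b) * p = 0 by rewrite /p; field; rewrite gt_eqF.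
pose bb := l * (1 - l) / (1 - b).
have hbb : (1 - b) * bb = l * (1 - l) by rewrite /bb mulrC mulfVK ?gt_eqF.
have bb0 : 0 <= bb by apply: divr_ge0; [apply: mulr_ge0; lra | lra].
pose g := bb / (1 - p).
have e2 : g * (1 - p) = bb by rewrite /g mulfVK // gt_eqF // subr_gt0.
have g0 : 0 <= g by apply: divr_ge0; lra.
pose a := (l + p * g) / (1 - p).
have e1 : a * (1 - p) = l + p * g by rewrite /a mulfVK // gt_eqF // subr_gt0.
have a0 : 0 < a by apply: divr_gt0; [apply: ltr_pwDl => //; apply: mulr_ge0; lra | lra].
have aE : a = (l * (1 - b) * (1 - 2 * b) + b * l * (1 - l)) / (1 - 2 * b) ^+ 2.
  rewrite /a /g /bb /p; field.
  by rewrite !gt_eqF //; lra.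
have a1 : a < 1.
  rewrite aE ltr_pdivrMr ?exprn_gt0 // mul1r.
  have -> : l * (1 - b) * (1 - 2 * b) + b * l * (1 - l)
    = l * (b ^+ 2 + (1 - b) ^+ 2) - b * l ^+ 2 by ring.
  rewrite lD.
  have : 0 < b * l ^+ 2 by apply: mulr_gt0 => //; exact: exprn_gt0.
  lra.
have pE : p = b / (1 - b) by [].
clearbody p bb g a.
pose f := fun k : nat => (1 - a) + p ^+ k * (a + g * k%:R).
have dif : forall k, f k - f k.+1 = p ^+ k * (l + bb * k%:R).
  move=> k.
  have -> : l + bb * k%:R = a * (1 - p) - p * g + g * (1 - p) * k%:R by rewrite e1 e2; ring.
  by rewrite /f -natr1 exprS; ring.
have dec : forall k, f k.+1 <= f k.
  move=> k; have := dif k.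
  have : 0 <= p ^+ k * (l + bb * k%:R).
    apply: mulr_ge0; [apply: exprn_ge0; lra| apply: addr_ge0; [lra| apply: mulr_ge0 => //; exact: ler0n]].
  lra.
have fle : forall j k, f (k + j)%N <= f k.
  elim=> [|j IH] k; first by rewrite addn0.
  by rewrite addnS; exact: le_trans (dec _) (IH k).
have f0 : f 0%N = 1 by rewrite /f expr0 mulr0 addr0 mul1r; ring.
have f1 : f 1%N = 1 - l by have := dif 0%N; rewrite f0 expr0 mulr0 addr0 mul1r; lra.
have fK : forall k, 1 - a < f k.
  move=> k; rewrite /f ltr_pwDr //; apply: mulr_gt0; first exact: exprn_gt0.
  by apply: ltr_pwDl => //; apply: mulr_ge0 => //; exact: ler0n.
have fle1 : forall k, f k <= 1 by move=> k; rewrite -f0; have := fle k 0%N; rewrite add0n.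
split => //.
exists (fun x => f (size x)), (1 - a), 2; split.
- lra.
- lra.
- move=> x; split; first exact: fK.
  have := fle1 (size x); lra.
case=> [|c s].
  rewrite /Delta (eq_bigr (fun _ => f 1%N)); last by move=> i _; rewrite /= ?size_succ ?size_rcons.
  rewrite avg_const // f1 /=; rewrite f0; lra.
rewrite /Delta pbetaE // /level /= size_pred_v.
rewrite (eq_bigr (fun _ => f (size s).+2)); last by move=> i _; rewrite size_succ.
rewrite -mulrA avg_const //.
rewrite -pE.
set k := size s.
have E : b * f k + (1 - b) * f k.+2 - f k.+1
    = b * (f k - f k.+1) - (1 - b) * (f k.+1 - f k.+2) by ring.
rewrite E !dif.
have -> : b * (p ^+ k * (l + bb * k%:R)) - (1 - b) * (p ^+ k.+1 * (l + bb * k.+1%:R))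
   = p ^+ k * (l + bb * k%:R) * (b - (1 - b) * p) - p ^+ k.+1 * ((1 - b) * bb - l * (1 - l))
     - l * (1 - l) * p ^+ k.+1.
  by rewrite -natr1 exprS; ring.
rewrite hbp hbb subrr !mulr0 !subr0.
have P0 : p ^+ k.+1 != 0 by rewrite gt_eqF // exprn_gt0.
rewrite sub0r mulNr mulfK //.
have := fle k 1%N; rewrite add1n f1 => hk.
nra.
Qed.

End S4.

Theorem proposition1p3 (R : realType) (m : nat) (hm : (2 <= m)%N) :
  (forall b1 b2 : R, 0 < b1 -> b1 <= b2 -> b2 < 2^-1 ->
     (lambda1 m b2 <= lambda1 m b1)%E) /\
  (forall beta : R, 0 < beta -> beta < 2^-1 ->
     (((1 - 2 * beta) ^+ 2 / (beta ^+ 2 + (1 - beta) ^+ 2))%:E <= lambda1 m beta)%E /\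
     (lambda1 m beta <= ((1 - 2 * beta) / (1 - beta))%:E)%E).
Proof.
have hm0 : (0 < m)%N by apply: leq_trans hm.
have h2 : (2^-1 : R) < 1 by rewrite invf_lt1 // ltr1n.
split.
  move=> b1 b2 h1 h12 hb2.
  apply: ereal_sup_le => _ [l hl <-]; exists l => //.
  exact: (@A_mono R m hm0 b1 b2 h1 h12 (lt_trans hb2 h2)).
move=> b h0 h1; split.
  apply: ereal_sup_ubound; exists ((1 - 2 * b) ^+ 2 / (b ^+ 2 + (1 - b) ^+ 2)) => //.
  exact: lower_mem.
apply: ge_ereal_sup => _ [l [l0 [v [c [C [c0 cC hv hD]]]]] <-].
rewrite lee_fin.
have hb1 : b < 1 by exact: lt_trans h1 h2.
have [Fc FC Froot Frec] := @radial R m hm0 b l c C v h0 hb1 l0 c0 hv hD.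
set F := @levinf R m v in Fc FC Froot Frec.
have Fp : forall k, 0 < F k by move=> k; exact: lt_le_trans c0 (Fc k).
have hd := @seq_dec R b l F h0 hb1 l0 Fp Froot Frec.
exact: (@seq_ub R b l F h0 h1 l0 Fp hd).
Qed.
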